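(* Let $T$ be a ring which is integral over its center $C=C(T)$. Suppose $A$ is a conch maximal subring of $C$, and suppose the integral closure $B$ of $A$ in $T$ (the set of elements of $T$ that are roots of monic polynomials with coefficients in $A$) is a subring of $T$. Then $T$ has a maximal subring $R$ with $B\subseteq R$ and $R\cap C=A$.
   Context: All rings are associative with identity $1\neq0$; subrings contain the identity. A maximal subring of a ring $S$ is a proper subring with no subring strictly between it and $S$. $T$ is integral over its center if every element of $T$ is a root of a monic polynomial with coefficients in $C(T)$. A conch maximal subring of the commutative ring $C$ is a maximal subring $A$ of $C$ for which there exists a unit $u$ of $C$ with $u\in A$ and $u^{-1}\notin A$. *)

(* Defs.v *)
From HB Require Import structures.
From mathcomp Require Import all_boot all_order all_algebra.
Set Implicit Arguments. Unset Strict Implicit. Unset Printing Implicit Defensive.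
Import GRing.Theory.
Local Open Scope ring_scope.

Definition is_subring (T : nzRingType) (S : T -> Prop) : Prop :=
  [/\ S 1, (forall x y, S x -> S y -> S (x - y)) &
      (forall x y, S x -> S y -> S (x * y))].

Definition subset_of (T : Type) (S U : T -> Prop) : Prop := forall x, S x -> U x.

Definition maximal_subring_of (T : nzRingType) (S R : T -> Prop) : Prop :=
  [/\ is_subring R, subset_of R S, (exists x, S x /\ ~ R x) &
      (forall R' : T -> Prop, is_subring R' -> subset_of R R' -> subset_of R' S ->
         (forall x, R' x <-> R x) \/ (forall x, R' x <-> S x))].

Definition center (T : nzRingType) : T -> Prop :=
  fun x => forall y : T, x * y = y * x.

Definition integral_over (T : nzRingType) (S : T -> Prop) (x : T) : Prop :=
  exists p : {poly T}, [/\ p \is monic, (forall i, S p`_i) & p.[x] = 0].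

Definition integral_closure (T : nzRingType) (S : T -> Prop) : T -> Prop :=
  fun x => integral_over S x.

Definition conch_maximal_subring_of (T : nzRingType) (C A : T -> Prop) : Prop :=
  maximal_subring_of C A /\
  exists u v : T, [/\ C u, C v, u * v = 1 /\ v * u = 1 & A u /\ ~ A v].

(* Main.v *)
Require Import Defs.
From mathcomp Require Import all_boot all_order all_algebra.
From mathcomp Require Import boolp classical_sets.
From Stdlib Require Import Classical.
Import GRing.Theory.
Local Open Scope ring_scope.
Set Implicit Arguments. Unset Strict Implicit.

Section Helpers.
Variable T : nzRingType.
Variable S : T -> Prop.
Hypothesis HS : is_subring S.

Lemma sr1 : S 1. Proof. by case: HS. Qed.
Lemma sr0 : S 0. Proof. case: HS => h1 hB _; by rewrite -(subrr 1); apply: hB. Qed.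
Lemma srB x y : S x -> S y -> S (x - y). Proof. by case: HS => _ h _; apply: h. Qed.
Lemma srM x y : S x -> S y -> S (x * y). Proof. by case: HS => _ _ h; apply: h. Qed.
Lemma srN x : S x -> S (- x). Proof. move=> h; rewrite -sub0r; apply: srB => //; exact: sr0. Qed.
Lemma srD x y : S x -> S y -> S (x + y).
Proof. move=> hx hy; rewrite -(opprK y); apply: srB => //; exact: srN. Qed.
Lemma srX x n : S x -> S (x ^+ n).
Proof. move=> hx; elim: n => [|n IH]; first by rewrite expr0; exact: sr1.
by rewrite exprS; apply: srM. Qed.
Lemma srsum n (F : 'I_n -> T) : (forall i, S (F i)) -> S (\sum_(i < n) F i).
Proof. move=> h; apply: big_ind => //; [exact: sr0 | exact: srD]. Qed.
End Helpers.

Lemma center_subring (T : nzRingType) : is_subring (@center T).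
Proof.
split; rewrite /center.
- by move=> y; rewrite mul1r mulr1.
- by move=> x y hx hy z; rewrite mulrBl mulrBr hx hy.
- by move=> x y hx hy z; rewrite -mulrA hy mulrA hx mulrA.
Qed.

Lemma bound_exists (P : nat -> nat -> Prop) n :
  (forall i k m, P i k -> P i (k + m)%N) ->
  (forall i, (i < n)%N -> exists k, P i k) ->
  exists K, forall i, (i < n)%N -> P i K.
Proof.
move=> mono; elim: n => [|n IH] h; first by exists 0%N.
have [K HK] : exists K, forall i, (i < n)%N -> P i K.
  by apply: IH => i hi; apply: h; exact: ltnW.
have [k hk] := h n (ltnSn n).
exists (K + k)%N => i; rewrite ltnS leq_eqVlt => /orP[/eqP->|hi].
  by rewrite addnC; apply: mono.
by apply: mono; apply: HK.
Qed.

Section Main.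
Variable T : nzRingType.
Variable A : T -> Prop.
Hypothesis hmax : maximal_subring_of (@center T) A.
Variables u v : T.
Hypotheses (Cu : center u) (Cv : center v) (uv1 : u * v = 1) (vu1 : v * u = 1)
  (Au : A u) (nAv : ~ A v).

Let Asr : is_subring A. Proof. by case: hmax. Qed.
Let AC : subset_of A (@center T). Proof. by case: hmax. Qed.

Lemma cuX k y : u ^+ k * y = y * u ^+ k.
Proof. have := @commrX _ y u k. rewrite /GRing.comm => h. by rewrite h // Cu. Qed.

Lemma Amono c k m : A (c * u ^+ k) -> A (c * u ^+ (k + m)).
Proof. by move=> h; rewrite exprD mulrA; apply: srM => //; apply: srX. Qed.

Lemma denom c : center c -> exists k, A (c * u ^+ k).
Proof.
pose D := fun c => center c /\ exists k, A (c * u ^+ k).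
have Dsr : is_subring D.
  split.
  - split; first exact: (sr1 (center_subring T)).
    by exists 0%N; rewrite expr0 mulr1; exact: sr1.
  - move=> x y [Cx [k hk]] [Cy [m hm]]; split; first exact: (srB (center_subring T)).
    exists (k + m)%N; rewrite mulrBl; apply: srB => //; first exact: Amono.
    by rewrite addnC; apply: Amono.
  - move=> x y [Cx [k hk]] [Cy [m hm]]; split; first exact: (srM (center_subring T)).
    exists (k + m)%N; rewrite exprD -mulrA (mulrA y) -(cuX k y) -!mulrA mulrA.
    exact: srM.
case: hmax => _ _ _ /(_ D Dsr) [].
- by move=> x hx; split; [exact: AC | exists 0%N; rewrite expr0 mulr1].
- by move=> x [].
- move=> h; exfalso; apply: nAv; apply/h; split => //; exists 1%N; by rewrite expr1 vu1; exact: sr1.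
- by move=> h /h [].
Qed.


Lemma A_in_B a : A a -> integral_closure A a.
Proof.
move=> ha; exists ('X - a%:P); split; first exact: monicXsubC.
- move=> i; rewrite coefB coefX coefC.
  case: i => [|[|i]] /=; rewrite ?subr0 ?sub0r ?subrr.
  + exact: srN.
  + exact: sr1.
  + exact: sr0.
- by rewrite hornerXsubC subrr.
Qed.

Lemma v_notin_B : ~ integral_closure A v.
Proof.
case=> p [mp cp pv].
have sz : (0 < size p)%N by rewrite size_poly_gt0 monic_neq0.
move: pv; rewrite horner_coef.
case Hs: (size p) sz => [//|[|m]] _.
  rewrite big_ord1 expr0 mulr1 => p0.
  move/monicP: mp; rewrite /lead_coef Hs /= p0 => /eqP; by rewrite eq_sym oner_eq0.
move=> h0.
have: u ^+ m * (\sum_(i < m.+2) p`_i * v ^+ i) = 0 by rewrite h0 mulr0.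
rewrite big_ord_recr /= mulrDr.
have -> : p`_m.+1 = 1 by move/monicP: mp; rewrite /lead_coef Hs.
rewrite mul1r exprSr mulrA -exprMn_comm; last by rewrite /GRing.comm Cv.
rewrite uv1 expr1n mul1r mulr_sumr => /eqP; rewrite addr_eq0 => /eqP hv.
apply: nAv; rewrite -[v]opprK -hv; apply: srN => //.
apply: srsum => // i.
rewrite mulrA (cuX m) -mulrA.
have hi : (i <= m)%N by rewrite -ltnS.
have -> : u ^+ m = u ^+ (m - i) * u ^+ i by rewrite -exprD subnK.
rewrite -mulrA -exprMn_comm; last by rewrite /GRing.comm Cv.
rewrite uv1 expr1n mulr1; apply: srM => //; last exact: srX.
Qed.

Lemma scale_into_B x : integral_over (@center T) x ->
  exists K, integral_closure A (u ^+ K * x).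
Proof.
case=> p [mp cp px].
have sz : (0 < size p)%N by rewrite size_poly_gt0 monic_neq0.
case Hs: (size p) sz => [//|n] _.
have [K HK] : exists K, forall i, (i < n)%N -> A (p`_i * u ^+ K).
  apply: (bound_exists (P := fun i k => A (p`_i * u ^+ k))).
    by move=> i k m; apply: Amono.
  by move=> i _; apply: denom.
have ln : p`_n = 1 by move/monicP: mp; rewrite /lead_coef Hs.
pose q := \poly_(i < n.+1) (p`_i * u ^+ (K * (n - i))).
have qn : p`_n * u ^+ (K * (n - n)) = 1 by rewrite subnn muln0 expr0 mulr1 ln.
exists K; exists q; split.
- apply/monicP; rewrite lead_coef_poly //= qn; exact: oner_neq0.
- move=> i; rewrite coef_poly; case: ltnP => hi; last exact: sr0.
  rewrite ltnS leq_eqVlt in hi; case/orP: hi => [/eqP->|hi]; first by rewrite qn; exact: sr1.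
  have : (K <= K * (n - i))%N by rewrite leq_pmulr // subn_gt0.
  move/subnK <-; rewrite addnC; apply: Amono; exact: HK.
- rewrite horner_coef size_poly_eq; last by rewrite /= qn oner_neq0.
  have -> : \sum_(i < n.+1) q`_i * (u ^+ K * x) ^+ i
          = u ^+ (K * n) * \sum_(i < n.+1) p`_i * x ^+ i.
    rewrite mulr_sumr; apply: eq_bigr => i _.
    rewrite coef_poly ltn_ord exprMn_comm; last exact: cuX.
    rewrite -exprM mulrA -(mulrA p`_i) -exprD -mulnDr subnK; last by rewrite -ltnS.
    by rewrite [RHS]mulrA -(cp i (u ^+ _)).
  by rewrite -Hs -horner_coef px mulr0.
Qed.
End Main.

Unset Implicit Arguments.
Theorem theorem3p1 (T : nzRingType) (A : T -> Prop) :
  (forall x : T, integral_over (@center T) x) ->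
  conch_maximal_subring_of (@center T) A ->
  is_subring (integral_closure A) ->
  exists R : T -> Prop,
    [/\ maximal_subring_of (fun _ => True) R,
        subset_of (integral_closure A) R &
        (forall x, (R x /\ @center T x) <-> A x)].
Proof.
move=> hint [hmax [u [v [Cu Cv [uv1 vu1] [Au nAv]]]]] Bsr.
have Asr : is_subring A by case: hmax.
have AC : subset_of A (@center T) by case: hmax.
set B := integral_closure A in Bsr *.
have AB : subset_of A B by move=> a; exact: (A_in_B hmax).
have nBv : ~ B v by apply: (@v_notin_B T A hmax u v).
pose U (X : T -> Prop) := fun y => B y \/ X y.
pose P (X : T -> Prop) := is_subring (U X) /\ ~ U X v.
have [R0 [PR0 R0max]] : exists R0, P R0 /\ forall Y, (R0 `<` Y)%classic -> ~ P Y.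
  apply: Zorn_bigcup => F FP Ftot.
  set W := (\bigcup_(X in F) X)%classic.
  have common : forall x y, U W x -> U W y ->
      (B x /\ B y) \/ exists Z, F Z /\ U Z x /\ U Z y.
    move=> x y [bx|[X FX Xx]] [bY|[Y FY Yy]].
    - by left.
    - by right; exists Y; split => //; split; [left|right].
    - by right; exists X; split => //; split; [right|left].
    - right; case: (Ftot X Y FX FY) => h.
        by exists Y; split => //; split; right => //; apply: h.
      by exists X; split => //; split; right => //; apply: h.
  have lift : forall Z, F Z -> forall y, U Z y -> U W y.
    move=> Z FZ y [bY|zy]; [by left | by right; exists Z].
  split; first split.
  - by left; exact: sr1.
  - move=> x y hx hy; case: (common x y hx hy) => [[bx bY]|[Z [FZ [zx zy]]]].
      by left; exact: srB.
    by apply: (lift Z FZ); apply: srB => //; case: (FP Z FZ).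
  - move=> x y hx hy; case: (common x y hx hy) => [[bx bY]|[Z [FZ [zx zy]]]].
      by left; exact: srM.
    by apply: (lift Z FZ); apply: srM => //; case: (FP Z FZ).
  - case=> [//|[X FX Xv]]; by case: (FP X FX) => _; apply; right.
pose R := U R0.
have [Rsr nRv] := PR0.
have BR : subset_of B R by move=> x hx; left.
exists R; split => //.
- split => //; first by exists v.
  move=> R' R'sr RR' _.
  case: (classic (R' v)) => hv.
    right => x; split => // _.
    have [K hK] : exists K, B (u ^+ K * x) by apply: (@scale_into_B T A hmax u v) => //; exact: hint.
    have -> : x = v ^+ K * (u ^+ K * x).
      rewrite mulrA -exprMn_comm; last by rewrite /GRing.comm Cv.
      by rewrite vu1 expr1n mul1r.
    by apply: srM => //; [exact: srX | apply: RR'; apply: BR].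
  left => x; split; last exact: RR'.
  move=> hx; apply: NNPP => nx; apply: (R0max R').
    split; first by move=> y hy; apply: RR'; right.
    by move=> h; apply: nx; right; apply: h.
  have eU : U R' = R'.
    apply: funext => y; apply: propext; split; last by right.
    by case=> // hy; apply: RR'; left.
  by rewrite /P eU.
- move=> x; split; last first.
    by move=> ha; split; [apply: BR; exact: AB | exact: AC].
  pose D := fun y => R y /\ center y.
  have Dsr : is_subring D.
    split.
    + split; [exact: sr1 | exact: (sr1 (center_subring T))].
    + by move=> y z [? ?] [? ?]; split; [exact: srB | exact: (srB (center_subring T))].
    + by move=> y z [? ?] [? ?]; split; [exact: srM | exact: (srM (center_subring T))].
  case: hmax => _ _ _ /(_ D Dsr) [].
  - by move=> y hy; split; [apply: BR; exact: AB | exact: AC].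
  - by move=> y [].
  - by move=> h /h.
  - by move=> h; exfalso; apply: nRv; have /h [] : center v := Cv.
Qed.
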